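(* Let $q=2$. Let $f=\phi(F)$ be a symplectic basis function with $F$ of class $(\rho,\sigma,\tau,\upsilon)\neq(1,0,m-2,0)$ and $\rho>0$. Then there exists $g\in \mathbf F_2\operatorname{Sp}(V)$ such that $gf$ is a function of class $(\rho-1,\sigma,\tau+2,\upsilon)$.
   Context: $k=\mathbf F_2$. $V$ is a $2m$-dimensional $k$-space with nondegenerate alternating form and symplectic basis with coordinate functions $x_1,\dots,x_m,y_m,\dots,y_1$; $\operatorname{Sp}(V)$ acts on functions $V\to k$ by linear substitution (note $x_i^2=x_i$ as functions), extended linearly to the group ring. In $k[X_1,\dots,X_m,Y_1,\dots,Y_m]$ put $W_i=X_iY_i$ and let $Z_i$ denote $X_i$ or $Y_i$. A square-free homogeneous polynomial $F$ is of class $(\rho,\sigma,\tau,\upsilon)$ if there is a partition of $\{1,\dots,m\}$ into $R=\{r_1,\dots,r_\rho\}$, $R'=\{r'_1,\dots,r'_\rho\}$, $S,T,U$ with $|S|=\sigma,|T|=\tau,|U|=\upsilon$ and $F=\prod_{i=1}^\rho(W_{r_i}+W_{r'_i})\prod_{i\in S}W_i\prod_{i\in T}Z_i$; a function is of that class if it equals $\phi(F')$ for some $F'$ of that class, where $\phi$ is evaluation $X_i\mapsto x_i,Y_i\mapsto y_i$. $P^\lambda_\ell$ is the set of such polynomials with $2\rho+2\sigma+\tau=\lambda$ and $\sigma\leq\ell$; choose $B^\lambda_0\subseteq P^\lambda_0$ maximal linearly independent and inductively $B^\lambda_\ell=B^\lambda_{\ell-1}\cup P'^\lambda_\ell$ ($P'^\lambda_\ell\subseteq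 P^\lambda_\ell$) a basis of the span of $P^\lambda_\ell$. For $q=2$ a symplectic basis function is $\phi(F)$ with $F\in B^\lambda_{\lfloor\lambda/2\rfloor}$, $1\le\lambda\le 2m-1$. *)

(* Defs.v *)
From HB Require Import structures.
From mathcomp Require Import all_boot all_order all_algebra.
Set Implicit Arguments. Unset Strict Implicit. Unset Printing Implicit Defensive.
Import GRing.Theory.
Local Open Scope ring_scope.

(* k = F_2, V = k^(2m) as row vectors; coordinate order
   x_1, ..., x_m, y_m, ..., y_1  (indices 0..m-1 for x_i, and y_i at 2m-1-i). *)
Definition Vsp (m : nat) := 'rV['F_2]_(m + m).

Definition Fn (m : nat) := {ffun Vsp m -> 'F_2}.

Definition xco (m : nat) (i : 'I_m) (v : Vsp m) : 'F_2 := v ord0 (lshift m i).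
Definition yco (m : nat) (i : 'I_m) (v : Vsp m) : 'F_2 := v ord0 (rshift m (rev_ord i)).

(* Gram matrix of the alternating form in the symplectic basis e_1..e_m,f_m..f_1 *)
Definition Jform (m : nat) : 'M['F_2]_(m + m) :=
  \matrix_(i, j) ((i + j == (m + m).-1)%N)%:R.

(* Sp(V), acting on row vectors by v |-> v *m g *)
Definition symplectic (m : nat) (g : 'M['F_2]_(m + m)) : bool :=
  g *m Jform m *m g^T == Jform m.

(* action of an element  a = sum_g a(g) g  of the group ring F_2 Sp(V)
   on a function f by linear substitution:  (g f)(v) = f(v g). *)
Definition in_group_ring (m : nat) (a : 'M['F_2]_(m + m) -> 'F_2) : Prop :=
  forall g, a g != 0 -> symplectic g.

Definition gr_act (m : nat) (a : 'M['F_2]_(m + m) -> 'F_2) (f : Fn m) : Fn m :=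
  [ffun v => \sum_(g : 'M['F_2]_(m + m)) a g * f (v *m g)].

(* phi(F) for the polynomial
   F = prod_i (W_{r_i} + W_{r'_i}) * prod_{i in S} W_i * prod_{i in T} Z_i,
   where Z_i = Y_i if z i, and Z_i = X_i otherwise. *)
Definition class_fun (m rho : nat) (r r' : 'I_rho -> 'I_m) (S T : {set 'I_m})
    (z : 'I_m -> bool) : Fn m :=
  [ffun v =>
     (\prod_(i < rho) (xco (r i) v * yco (r i) v + xco (r' i) v * yco (r' i) v))
   * (\prod_(i in S) (xco i v * yco i v))
   * (\prod_(i in T) (if z i then yco i v else xco i v))].

Definition of_class (m rho sigma tau upsilon : nat) (f : Fn m) : Prop :=
  exists (r r' : 'I_rho -> 'I_m) (S T U : {set 'I_m}) (z : 'I_m -> bool),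
    let R := [set r i | i in 'I_rho] in
    let R' := [set r' i | i in 'I_rho] in
    [/\ #|R| = rho, #|R'| = rho, #|S| = sigma, #|T| = tau & #|U| = upsilon]
    /\ [/\ [disjoint R & R'], [disjoint R & S :|: T :|: U],
           [disjoint R' & S :|: T :|: U] & [disjoint S & T]]
    /\ [disjoint S & U] /\ [disjoint T & U]
    /\ R :|: R' :|: S :|: T :|: U = [set: 'I_m]
    /\ f = class_fun r r' S T z.

Definition Pset (m lam ell : nat) (f : Fn m) : Prop :=
  exists rho sigma tau upsilon,
    (2 * rho + 2 * sigma + tau = lam)%N /\ (sigma <= ell)%N
    /\ of_class rho sigma tau upsilon f.

Definition lcomb (m : nat) (s : seq (Fn m)) (c : Fn m -> 'F_2) : Fn m :=
  [ffun v => \sum_(b <- s) c b * b v].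

Definition lin_indep (m : nat) (B : {set Fn m}) : Prop :=
  forall c : Fn m -> 'F_2, lcomb (enum B) c = [ffun _ => 0] ->
    forall b, b \in B -> c b = 0.

Definition in_span (m : nat) (P : Fn m -> Prop) (f : Fn m) : Prop :=
  exists (s : seq (Fn m)) (c : Fn m -> 'F_2),
    (forall b, b \in s -> P b) /\ f = lcomb s c.

Definition basis_of_span (m : nat) (B : {set Fn m}) (P : Fn m -> Prop) : Prop :=
  lin_indep B /\ (forall f, in_span (fun b => b \in B) f <-> in_span P f).

Definition valid_B (m : nat) (Bf : nat -> nat -> {set Fn m}) : Prop :=
  forall lam, (1 <= lam <= (m + m).-1)%N ->
    [/\
        (forall b, b \in Bf lam 0%N -> Pset lam 0 b),
        lin_indep (Bf lam 0%N),
        (forall B' : {set Fn m}, Bf lam 0%N \proper B' ->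
            (forall b, b \in B' -> Pset lam 0 b) -> ~ lin_indep B')
      & forall ell, (1 <= ell <= lam./2)%N ->
          exists P' : {set Fn m},
            (forall b, b \in P' -> Pset lam ell b)
            /\ Bf lam ell = Bf lam ell.-1 :|: P'
            /\ basis_of_span (Bf lam ell) (Pset lam ell)].

Definition symp_basis_fun (m : nat) (Bf : nat -> nat -> {set Fn m}) (f : Fn m) : Prop :=
  exists lam, (1 <= lam <= (m + m).-1)%N /\ f \in Bf lam lam./2.

(* Main.v *)
Require Import Defs.
From HB Require Import structures.
From mathcomp Require Import all_boot all_order all_algebra.
From Stdlib Require Import FunctionalExtensionality Lia.
Set Implicit Arguments. Unset Strict Implicit. Unset Printing Implicit Defensive.
Import GRing.Theory.
Local Open Scope ring_scope.

Lemma F2P (x : 'F_2) : x = 0 \/ x = 1.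
Proof. case: x => [[|[|n]] //= H]; [left|right]; exact: val_inj. Qed.

Lemma F2_add_self (x : 'F_2) : x + x = 0.
Proof. by case: (F2P x) => ->; apply: val_inj. Qed.

Ltac nlia := rewrite ?addnE ?subnE ?mulnE; lia.

Section Gen.
Variable m : nat.

Definition omg (v u : Vsp m) : 'F_2 :=
  \sum_i (xco i v * yco i u + yco i v * xco i u).

Lemma rev_lshift (i : 'I_m) : rev_ord (lshift m i) = rshift m (rev_ord i).
Proof.
apply: val_inj => /=; have := ltn_ord i; rewrite -addnBA //.
Qed.

Lemma rev_rshift (i : 'I_m) : rev_ord (rshift m i) = lshift m (rev_ord i).
Proof. apply: val_inj => /=; rewrite -addnS subnDl //. Qed.

Lemma form_omg (v u : Vsp m) : (v *m Jform m *m u^T) 0 0 = omg v u.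
Proof.
rewrite !mxE.
have H : forall k : 'I_(m+m), (v *m Jform m) 0 k = v 0 (rev_ord k).
  move=> k; rewrite mxE (bigD1 (rev_ord k)) //= big1 ?addr0.
    rewrite mxE /=.
    have -> : (m + m - k.+1 + k = (m + m).-1)%N by have := ltn_ord k; move: (nat_of_ord k) => K /ltP HK; rewrite -subn1; move: HK; nlia.
    by rewrite eqxx mulr1.
  move=> l /negbTE Hl; rewrite mxE.
  case: eqP => [E|_]; last by rewrite mulr0.
  exfalso; move: Hl; suff -> : l = rev_ord k by rewrite eqxx.
  apply: val_inj => /=; move: E (ltn_ord k); move: (nat_of_ord l) (nat_of_ord k) => L K; rewrite -subn1 => E /ltP HK; move: E HK; nlia.
under eq_bigr do rewrite H mxE.
rewrite big_split_ord /=.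
under eq_bigr do rewrite rev_lshift.
under [X in _ + X = _]eq_bigr do rewrite rev_rshift.
rewrite [X in _ + X = _](reindex_inj rev_ord_inj) /=.
rewrite /omg -big_split /=; apply: eq_bigr => i _.
rewrite /xco /yco rev_ordK addrC; congr (_ + _); rewrite mulrC //.
Qed.

Definition tv (u : Vsp m) : 'M['F_2]_(m + m) := 1%:M + (Jform m *m u^T) *m u.

Lemma tvE (v u : Vsp m) : v *m tv u = v + omg v u *: u.
Proof.
rewrite /tv mulmxDr mulmx1 !mulmxA; congr (_ + _).
by rewrite [v *m _ *m _]mx11_scalar form_omg mul_scalar_mx.
Qed.

Lemma Jform_tr : (Jform m)^T = Jform m.
Proof. by apply/matrixP => i j; rewrite !mxE addnC. Qed.

Lemma omg_self (u : Vsp m) : omg u u = 0.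
Proof. rewrite /omg big1 // => i _; rewrite mulrC F2_add_self //. Qed.

Lemma mx_add_self (p q : nat) (A : 'M['F_2]_(p, q)) : A + A = 0.
Proof. by apply/matrixP => i j; rewrite !mxE F2_add_self. Qed.

Lemma tv_sympl (u : Vsp m) : symplectic (tv u).
Proof.
apply/eqP; rewrite /tv linearD /= trmx1 trmx_mul trmx_mul trmxK Jform_tr.
set J := Jform m.
rewrite !mulmxDl mul1mx !mulmxDr !mulmx1.
have E : u *m J *m u^T = 0.
  by rewrite [LHS]mx11_scalar form_omg omg_self; apply/matrixP=> i j; rewrite !mxE mul0rn.
have -> : J *m u^T *m u *m J *m (u^T *m (u *m J)) = 0.
  by rewrite !mulmxA -(mulmxA (J *m u^T)) -(mulmxA (J *m u^T)) E mulmx0 !mul0mx.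
rewrite addr0 -!mulmxA -addrA mx_add_self addr0 //.
Qed.

Lemma sympl_mul (g h : 'M['F_2]_(m + m)) : symplectic g -> symplectic h -> symplectic (g *m h).
Proof.
move=> /eqP Hg /eqP Hh; apply/eqP.
by rewrite trmx_mul -!mulmxA [X in g *m X]mulmxA [X in g *m X]mulmxA Hh mulmxA Hg.
Qed.

Lemma sympl1 : symplectic (1%:M : 'M['F_2]_(m + m)).
Proof. by apply/eqP; rewrite trmx1 mul1mx mulmx1. Qed.

End Gen.

Fixpoint lsum (k : nat) (F : nat -> 'F_2) : 'F_2 :=
  match k with 0 => 0 | k.+1 => lsum k F + F k end.

Lemma lsumE k F : lsum k F = \sum_(0 <= j < k) F j.
Proof. elim: k => [|k IH] /=; first by rewrite big_geq. by rewrite big_nat_recr //= IH. Qed.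

Definition params := (seq 'F_2 * seq 'F_2)%type.
Definition state := ((nat -> 'F_2) * (nat -> 'F_2))%type.

Definition ltv (k : nat) (p : params) (s : state) : state :=
  let w := lsum k (fun j => s.1 j * nth 0 p.2 j + s.2 j * nth 0 p.1 j) in
  (fun j => s.1 j + w * nth 0 p.1 j, fun j => s.2 j + w * nth 0 p.2 j).

Definition lw (k : nat) (ws : seq params) (s : state) : state :=
  foldl (fun s p => ltv k p s) s ws.

Fixpoint sumL (T : Type) (ws : seq T) (F : T -> 'F_2) : 'F_2 :=
  match ws with [::] => 0 | w :: ws' => F w + sumL ws' F end.

Lemma sumLE (T : Type) (ws : seq T) F : sumL ws F = \sum_(w <- ws) F w.
Proof. elim: ws => [|w ws IH] /=; by rewrite ?big_nil ?big_cons ?IH. Qed.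

Section Red.
Variable m : nat.
Variable pl : seq 'I_m.
Variable a0 : 'I_m.
Hypothesis upl : uniq pl.

Lemma xco_addZ (i : 'I_m) (v u : Vsp m) c : xco i (v + c *: u) = xco i v + c * xco i u.
Proof. by rewrite /xco !mxE. Qed.
Lemma yco_addZ (i : 'I_m) (v u : Vsp m) c : yco i (v + c *: u) = yco i v + c * yco i u.
Proof. by rewrite /yco !mxE. Qed.

Definition mkU (ux uy : 'I_m -> 'F_2) : Vsp m :=
  \row_k (match split k with inl i => ux i | inr j => uy (rev_ord j) end).

Lemma xco_mkU ux uy i : xco i (mkU ux uy) = ux i.
Proof.
rewrite /xco /mkU mxE.
by have -> : split (lshift m i) = inl i := unsplitK (inl _ i).
Qed.

Lemma yco_mkU ux uy i : yco i (mkU ux uy) = uy i.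
Proof.
rewrite /yco /mkU mxE.
by have -> : split (rshift m (rev_ord i)) = inr (rev_ord i) := unsplitK (inr _ (rev_ord i)); rewrite rev_ordK.
Qed.

Definition Up (p : params) : Vsp m :=
  mkU (fun i => nth 0 p.1 (index i pl)) (fun i => nth 0 p.2 (index i pl)).

Definition loc (v : Vsp m) : state :=
  (nth 0 [seq xco i v | i <- pl], nth 0 [seq yco i v | i <- pl]).

Definition okp (p : params) := (size p.1 <= size pl)%N && (size p.2 <= size pl)%N.

Lemma omg_Up v p : okp p ->
  omg v (Up p) = lsum (size pl) (fun j => (loc v).1 j * nth 0 p.2 j + (loc v).2 j * nth 0 p.1 j).
Proof.
move=> /andP[h1 h2].
rewrite lsumE /omg (bigID (fun i => i \in pl)) /= [X in _ + X]big1 ?addr0; last first.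
  move=> i Hi; rewrite /Up xco_mkU yco_mkU memNindex //.
  by rewrite !nth_default ?mulr0 ?addr0 // (leq_trans h1, leq_trans h2).
rewrite -big_uniq //= (big_nth a0) /=; apply: eq_big_nat => j /andP[_ Hj].
rewrite /Up xco_mkU yco_mkU index_uniq // !(nth_map a0) //.
Qed.

Lemma loc_tv v p : okp p -> loc (v *m tv (Up p)) = ltv (size pl) p (loc v).
Proof.
move=> hp; have := hp; move=> /andP[h1 h2].
rewrite tvE /ltv -omg_Up //; congr pair; apply: functional_extensionality => j /=.
- case: (ltnP j (size pl)) => Hj.
    by rewrite !(nth_map a0) // xco_addZ /Up xco_mkU index_uniq.
  by rewrite !nth_default ?size_map ?mulr0 ?addr0 // (leq_trans h1).
- case: (ltnP j (size pl)) => Hj.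
    by rewrite !(nth_map a0) // yco_addZ /Up yco_mkU index_uniq.
  by rewrite !nth_default ?size_map ?mulr0 ?addr0 // (leq_trans h2).
Qed.

Definition agree (v w : Vsp m) :=
  forall i, i \notin pl -> xco i w = xco i v /\ yco i w = yco i v.

Lemma agree_tv v p : okp p -> agree v (v *m tv (Up p)).
Proof.
move=> /andP[h1 h2] i Hi; rewrite tvE xco_addZ yco_addZ /Up xco_mkU yco_mkU memNindex //.
by rewrite !nth_default ?mulr0 ?addr0.
Qed.

Definition gw (ws : seq params) : 'M['F_2]_(m + m) :=
  foldr (fun p g => tv (Up p) *m g) 1%:M ws.

Lemma gw_sympl ws : symplectic (gw ws).
Proof. elim: ws => [|p ws IH] /=; [exact: sympl1 | exact: sympl_mul (tv_sympl _) IH]. Qed.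

Lemma loc_gw ws v : all okp ws -> loc (v *m gw ws) = lw (size pl) ws (loc v) /\ agree v (v *m gw ws).
Proof.
elim: ws v => [|p ws IH] v /=; first by rewrite mulmx1.
move=> /andP[hp hws]; rewrite mulmxA; have [-> Ha] := IH (v *m tv (Up p)) hws.
rewrite loc_tv //; split => // i Hi.
have [E1 E2] := agree_tv v hp Hi; have [E3 E4] := Ha i Hi.
by rewrite E3 E4.
Qed.

Definition gra (ws : seq (seq params)) (g : 'M['F_2]_(m + m)) : 'F_2 :=
  \sum_(w <- ws) (g == gw w)%:R.

Lemma reduce (ws : seq (seq params)) (f h : Fn m) (L L' : state -> 'F_2)
    (rest : Vsp m -> 'F_2) :
  all (all okp) ws ->
  (forall v, f v = L (loc v) * rest v) ->
  (forall v, h v = L' (loc v) * rest v) ->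
  (forall v w, agree v w -> rest w = rest v) ->
  (forall xs ys : seq 'F_2, size xs = size pl -> size ys = size pl ->
     sumL ws (fun w => L (lw (size pl) w (nth 0 xs, nth 0 ys))) = L' (nth 0 xs, nth 0 ys)) ->
  exists a, in_group_ring a /\ gr_act a f = h.
Proof.
move=> hws hf hh hr hid; exists (gra ws); split.
  move=> g Hg; have : has (fun w => g == gw w) ws.
    apply/negPn/negP => /hasPn Hn; move: Hg; rewrite /gra big1_seq ?eqxx //.
    by move=> w /Hn /negbTE ->.
  by case/hasP => w _ /eqP ->; exact: gw_sympl.
apply/ffunP => v; rewrite ffunE /gra.
under eq_bigr do rewrite mulr_suml.
rewrite exchange_big /=.
have E : forall w, w \in ws -> \sum_(g : 'M['F_2]_(m+m)) (g == gw w)%:R * f (v *m g) = L (lw (size pl) w (loc v)) * rest v.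
  move=> w Hw; rewrite (bigD1 (gw w)) //= eqxx mul1r big1 ?addr0; last first.
    by move=> g /negbTE ->; rewrite mul0r.
  have hw : all okp w by move/allP: hws => /(_ w Hw).
  have [E1 E2] := loc_gw v hw.
  by rewrite hf E1 (hr _ _ E2).
rewrite (eq_big_seq _ E) -mulr_suml -sumLE hh.
congr (_ * _); rewrite /loc hid ?size_map //.
Qed.

End Red.

Definition wsA : seq (seq params) :=
  [:: [:: ([:: 0; 0; 0], [:: 1; 0; 0])];
    [:: ([:: 0; 0; 0], [:: 1; 0; 1])]].
Definition wsB : seq (seq params) :=
  [:: [:: ([:: 0; 1; 0], [:: 0; 1; 1])];
    [:: ([:: 0; 1; 0], [:: 0; 0; 1]); ([:: 0; 0; 0], [:: 0; 1; 0])]].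
Definition wsC : seq (seq params) :=
  [:: [:: ([:: 0; 0; 0; 0], [:: 0; 1; 0; 1])];
    [:: ([:: 0; 0; 0; 0], [:: 1; 0; 0; 0])];
    [:: ([:: 0; 0; 0; 0], [:: 1; 0; 0; 1])];
    [:: ([:: 0; 0; 0; 1], [:: 0; 1; 0; 0]); ([:: 0; 0; 0; 0], [:: 0; 0; 0; 1])];
    [:: ([:: 0; 0; 0; 1], [:: 0; 1; 0; 1])];
    [:: ([:: 0; 0; 0; 1], [:: 1; 0; 0; 0])];
    [:: ([:: 0; 0; 0; 1], [:: 1; 0; 0; 0]); ([:: 0; 0; 0; 0], [:: 0; 0; 0; 1])];
    [:: ([:: 0; 0; 0; 1], [:: 1; 0; 0; 0]); ([:: 0; 0; 0; 0], [:: 0; 1; 0; 1])];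
    [:: ([:: 0; 0; 0; 1], [:: 1; 0; 0; 1])];
    [:: ([:: 0; 0; 0; 1], [:: 1; 0; 0; 1]); ([:: 0; 0; 0; 0], [:: 0; 1; 0; 0])];
    [:: ([:: 0; 1; 0; 1], [:: 0; 0; 0; 1]); ([:: 0; 0; 0; 0], [:: 0; 1; 0; 0])];
    [:: ([:: 0; 1; 0; 1], [:: 0; 1; 0; 1])];
    [:: ([:: 1; 0; 0; 1], [:: 0; 0; 0; 1]); ([:: 0; 0; 0; 0], [:: 1; 0; 0; 0])];
    [:: ([:: 1; 0; 0; 1], [:: 1; 0; 0; 1])]].
Definition LA (s : state) := s.1 0%N * s.2 0%N + s.1 1%N * s.2 1%N.
Definition LA' (s : state) := s.1 0%N * s.1 2%N.
Definition LB (s : state) := (s.1 0%N * s.2 0%N + s.1 1%N * s.2 1%N) * (s.1 2%N * s.2 2%N).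
Definition LB' (s : state) := s.1 0%N * s.2 0%N * (s.1 1%N * s.1 2%N).
Definition LC (s : state) := (s.1 0%N * s.2 0%N + s.1 1%N * s.2 1%N) * (s.1 2%N * s.2 2%N + s.1 3%N * s.2 3%N).
Definition LC' (s : state) := s.1 0%N * s.1 1%N * (s.1 2%N * s.2 2%N + s.1 3%N * s.2 3%N).

Ltac F2case x := case: (F2P x) => ->.

Lemma idA (xs ys : seq 'F_2) : size xs = 3%N -> size ys = 3%N ->
  sumL wsA (fun w => LA (lw 3 w (nth 0 xs, nth 0 ys))) = LA' (nth 0 xs, nth 0 ys).
Proof.
case: xs => [|x0 [|x1 [|x2 [|]]]] //; case: ys => [|y0 [|y1 [|y2 [|]]]] // _ _.
(F2case x0; F2case x1; F2case x2; F2case y0; F2case y1; F2case y2; apply: val_inj; vm_compute; reflexivity).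
Qed.
Lemma idB (xs ys : seq 'F_2) : size xs = 3%N -> size ys = 3%N ->
  sumL wsB (fun w => LB (lw 3 w (nth 0 xs, nth 0 ys))) = LB' (nth 0 xs, nth 0 ys).
Proof.
case: xs => [|x0 [|x1 [|x2 [|]]]] //; case: ys => [|y0 [|y1 [|y2 [|]]]] // _ _.
(F2case x0; F2case x1; F2case x2; F2case y0; F2case y1; F2case y2; apply: val_inj; vm_compute; reflexivity).
Qed.
Lemma idC (xs ys : seq 'F_2) : size xs = 4%N -> size ys = 4%N ->
  sumL wsC (fun w => LC (lw 4 w (nth 0 xs, nth 0 ys))) = LC' (nth 0 xs, nth 0 ys).
Proof.
case: xs => [|x0 [|x1 [|x2 [|x3 [|]]]]] //; case: ys => [|y0 [|y1 [|y2 [|y3 [|]]]]] // _ _.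
(F2case x0; F2case x1; F2case x2; F2case x3; F2case y0; F2case y1; F2case y2; F2case y3; apply: val_inj; vm_compute; reflexivity).
Qed.

Section Cls.
Variable m : nat.

Definition oh (R R' S T U : {set 'I_m}) :=
  forall x, ((x \in R) + (x \in R') + (x \in S) + (x \in T) + (x \in U) = 1)%N.

Lemma disjI (A B : {set 'I_m}) : (forall x, x \in A -> x \in B -> False) -> [disjoint A & B].
Proof.
move=> H; rewrite -setI_eq0; apply/eqP/setP => x; rewrite !inE.
by apply/negbTE/negP => /andP[/H]; auto.
Qed.

Lemma of_class_elim rho sigma tau upsilon (f : Fn m) :
  of_class rho sigma tau upsilon f ->
  exists (r r' : 'I_rho -> 'I_m) (S T U : {set 'I_m}) (z : 'I_m -> bool),
    [/\ injective r, injective r', #|S| = sigma, #|T| = tau & #|U| = upsilon] /\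
    oh [set r i | i in 'I_rho] [set r' i | i in 'I_rho] S T U /\
    f = class_fun r r' S T z.
Proof.
case=> r [r' [S [T [U [z]]]]] /= [[cR cR' cS cT cU] [[d1 d2 d3 d4] [d5 [d6 [cov ->]]]]].
exists r, r', S, T, U, z; split; last split => //.
  split => //.
  - move=> i j E; have /imset_injP H : #|[set r i | i in 'I_rho]| == #|'I_rho| by rewrite cR card_ord.
    exact: H.
  - move=> i j E; have /imset_injP H : #|[set r' i | i in 'I_rho]| == #|'I_rho| by rewrite cR' card_ord.
    exact: H.
move=> x.
have hc : x \in [set: 'I_m] by rewrite inE.
rewrite -cov !inE in hc.
have h1 : (x \in [set r i | i in 'I_rho]) ==> (x \notin [set r' i | i in 'I_rho]) by apply/implyP => H; rewrite (disjointFr d1 H).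
have h2 : (x \in [set r i | i in 'I_rho]) ==> ~~ [|| x \in S, x \in T | x \in U] by apply/implyP => H; move: (disjointFr d2 H); rewrite !inE -orbA => ->.
have h3 : (x \in [set r' i | i in 'I_rho]) ==> ~~ [|| x \in S, x \in T | x \in U] by apply/implyP => H; move: (disjointFr d3 H); rewrite !inE -orbA => ->.
have h4 : (x \in S) ==> (x \notin T) by apply/implyP => H; rewrite (disjointFr d4 H).
have h5 : (x \in S) ==> (x \notin U) by apply/implyP => H; rewrite (disjointFr d5 H).
have h6 : (x \in T) ==> (x \notin U) by apply/implyP => H; rewrite (disjointFr d6 H).
move: hc h1 h2 h3 h4 h5 h6.
by case: (x \in [set r i | i in 'I_rho]); case: (x \in [set r' i | i in 'I_rho]); case: (x \in S); case: (x \in T); case: (x \in U).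
Qed.

Lemma of_class_intro rho sigma tau upsilon (r r' : 'I_rho -> 'I_m) (S T U : {set 'I_m}) (z : 'I_m -> bool) :
  injective r -> injective r' -> #|S| = sigma -> #|T| = tau -> #|U| = upsilon ->
  oh [set r i | i in 'I_rho] [set r' i | i in 'I_rho] S T U ->
  of_class rho sigma tau upsilon (class_fun r r' S T z).
Proof.
move=> ir ir' cS cT cU H.
exists r, r', S, T, U, z => /=.
split; first by split => //; rewrite card_imset // card_ord.
split; first split.
- by apply: disjI => x h1 h2; move: (H x); rewrite h1 h2.
- by apply: disjI => x h1; rewrite !inE -!orbA => h2; move: (H x); rewrite h1; case/or3P: h2 => ->;
     rewrite ?addnS ?addSn.
- by apply: disjI => x h1; rewrite !inE -!orbA => h2; move: (H x); rewrite h1; case/or3P: h2 => ->;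
     rewrite ?addnS ?addSn.
- by apply: disjI => x h1 h2; move: (H x); rewrite h1 h2 ?addnS ?addSn.
split; first by apply: disjI => x h1 h2; move: (H x); rewrite h1 h2 ?addnS ?addSn.
split; first by apply: disjI => x h1 h2; move: (H x); rewrite h1 h2 ?addnS ?addSn.
split => //.
apply/setP => x; rewrite !inE; move: (H x).
by case: (x \in [set r i | i in 'I_rho]); case: (x \in [set r' i | i in 'I_rho]);
   case: (x \in S); case: (x \in T); case: (x \in U).
Qed.

End Cls.

Section H.
Variable m : nat.
Variables R R' S T U : {set 'I_m}.
Hypothesis OH : oh R R' S T U.

Lemma ohR x : x \in R -> [&& x \notin R', x \notin S, x \notin T & x \notin U].
Proof. by move=> h; move: (OH x); rewrite h; case: (x \in R'); case: (x \in S); case: (x \in T); case: (x \in U). Qed.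
Lemma ohR' x : x \in R' -> [&& x \notin R, x \notin S, x \notin T & x \notin U].
Proof. by move=> h; move: (OH x); rewrite h; case: (x \in R); case: (x \in S); case: (x \in T); case: (x \in U). Qed.
Lemma ohS x : x \in S -> [&& x \notin R, x \notin R', x \notin T & x \notin U].
Proof. by move=> h; move: (OH x); rewrite h; case: (x \in R); case: (x \in R'); case: (x \in T); case: (x \in U). Qed.
Lemma ohT x : x \in T -> [&& x \notin R, x \notin R', x \notin S & x \notin U].
Proof. by move=> h; move: (OH x); rewrite h; case: (x \in R); case: (x \in R'); case: (x \in S); case: (x \in U). Qed.
Lemma ohU x : x \in U -> [&& x \notin R, x \notin R', x \notin S & x \notin T].
Proof. by move=> h; move: (OH x); rewrite h; case: (x \in R); case: (x \in R'); case: (x \in S); case: (x \in T). Qed.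

Lemma oh_card : (#|R| + #|R'| + #|S| + #|T| + #|U| = m)%N.
Proof.
have E : forall A : {set 'I_m}, #|A| = (\sum_x (x \in A : nat))%N.
  by move=> A; rewrite -sum1_card big_mkcond; apply: eq_bigr => x _; case: (x \in A).
rewrite !E -!big_split /=.
under eq_bigr do rewrite OH.
by rewrite sum_nat_const card_ord muln1.
Qed.
End H.

Lemma memR2 m p (r : 'I_p.+1 -> 'I_m) (ir : injective r) x :
  (x \in [set r (lift ord0 i) | i in 'I_p]) = (x \in [set r i | i in 'I_p.+1]) && (x != r ord0).
Proof.
apply/imsetP/andP => [[i _ ->]|[/imsetP[j _ ->] hj]].
  by split; [apply: imset_f | rewrite (inj_eq ir) eq_sym neq_lift].
case: (unliftP ord0 j) hj => [j' ->|->]; last by rewrite eqxx.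
by move=> _; exists j'.
Qed.

Lemma neq_mem m (A : {set 'I_m}) x y : x \in A -> y \notin A -> x != y.
Proof. by move=> h1 h2; apply/eqP => E; move: h1; rewrite E (negbTE h2). Qed.

Lemma notin3 m (a b c x : 'I_m) : x != a -> x != b -> x != c -> x \notin [:: a; b; c].
Proof. by move=> h1 h2 h3; rewrite !inE negb_or h1 negb_or h2 h3. Qed.

Lemma notin4 m (a b c d x : 'I_m) : x != a -> x != b -> x != c -> x != d -> x \notin [:: a; b; c; d].
Proof. by move=> h1 h2 h3 h4; rewrite !inE negb_or h1 negb_or h2 negb_or h3 h4. Qed.

Section AC. Variable R : comRingType.
Lemma acB1 (p P W S T : R) : p * P * (W * S) * T = p * W * (P * S * T).
Proof. by rewrite -!mulrA; congr (_ * _); rewrite mulrCA; congr (_ * _); rewrite mulrA. Qed.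
Lemma acB2 (P Wa S xb xc T : R) : P * (Wa * S) * (xb * (xc * T)) = Wa * (xb * xc) * (P * S * T).
Proof.
rewrite -!mulrA mulrCA; congr (_ * _).
rewrite [S * (xb * _)]mulrCA mulrCA; congr (_*_); rewrite [S * (xc * _)]mulrCA mulrCA //.
Qed.
Lemma acC1 (p0 p1 P S T : R) : p0 * (p1 * P) * S * T = p0 * p1 * (P * S * T).
Proof. by rewrite -!mulrA. Qed.
Lemma acC2 (p1 P S xa xb T : R) : p1 * P * S * (xa * (xb * T)) = xa * xb * p1 * (P * S * T).
Proof.
rewrite -!mulrA [S * (xa * _)]mulrCA [P * (xa * _)]mulrCA [p1 * (xa * _)]mulrCA; congr (_ * _).
by rewrite [S * (xb * _)]mulrCA [P * (xb * _)]mulrCA [p1 * (xb * _)]mulrCA.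
Qed.
End AC.

Lemma caseA m p (r r' : 'I_p.+1 -> 'I_m) (S T U : {set 'I_m}) z c sigma tau upsilon :
  injective r -> injective r' ->
  oh [set r i | i in 'I_p.+1] [set r' i | i in 'I_p.+1] S T U ->
  c \in U -> #|S| = sigma -> #|T| = tau -> #|U| = upsilon ->
  exists g, in_group_ring g /\
    of_class p sigma tau.+2 upsilon (gr_act g (class_fun r r' S T z)).
Proof.
move=> ir ir' OH cU cS cT cU'.
set R := [set r i | i in 'I_p.+1] in OH *; set R' := [set r' i | i in 'I_p.+1] in OH *.
set a := r ord0; set b := r' ord0.
have aR : a \in R by apply: imset_f.
have bR'0 : b \in R' by apply: imset_f.
have /and4P[aR' aS aT aU] := ohR OH aR.
have /and4P[bR bS bT bU] := ohR' OH bR'0.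
have /and4P[cR cR' cS' cT'] := ohU OH cU.
have ab : a != b := neq_mem aR bR.
have ac : a != c by rewrite eq_sym (neq_mem cU aU).
have bc : b != c by rewrite eq_sym (neq_mem cU bU).
set r2 := fun i : 'I_p => r (lift ord0 i).
set r2' := fun i : 'I_p => r' (lift ord0 i).
set T2 := a |: (c |: T).
set U2 := b |: (U :\ c).
set z2 := fun i => if i \in T then z i else false.
set rest := fun v : Vsp m =>
  (\prod_(i < p) (xco (r2 i) v * yco (r2 i) v + xco (r2' i) v * yco (r2' i) v))
  * (\prod_(i in S) (xco i v * yco i v))
  * (\prod_(i in T) (if z i then yco i v else xco i v)).
have [g [Hg Hgf]] : exists g, in_group_ring g /\
    gr_act g (class_fun r r' S T z) = class_fun r2 r2' S T2 z2.
  apply: (@reduce m [:: a; b; c] a _ wsA _ _ LA LA' rest).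
  - by rewrite /= !inE negb_or ab ac bc.
  - by [].
  - move=> v; rewrite /class_fun ffunE big_ord_recl /rest /LA /loc /= -!mulrA.
    by [].
  - move=> v; rewrite /class_fun ffunE /rest /LA' /loc /= /T2.
    rewrite big_setU1 /=; last by rewrite !inE negb_or ac.
    rewrite big_setU1 //= /z2 (negbTE aT) (negbTE cT').
    under [X in xco c v * X]eq_bigr => i hi do rewrite hi.
    set P0 := \prod_(i < p) _; set SW := \prod_(i in S) _; set TZ := \prod_(i in T) _.
    by rewrite -[RHS]mulrA mulrCA; congr (_ * _); rewrite mulrCA.
  - move=> v w Hag; rewrite /rest.
    have Hn : forall i, i \notin [:: a; b; c] ->
        xco i w = xco i v /\ yco i w = yco i v by move=> i hi; exact: Hag.
    congr (_ * _ * _); apply: eq_bigr => i hi.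
    + have r2R : r2 i \in R by apply: imset_f.
      have r2R' : r2' i \in R' by apply: imset_f.
      have n1 : r2 i \notin [:: a; b; c].
        apply: notin3; first by rewrite (inj_eq ir) eq_sym neq_lift.
          exact: neq_mem r2R bR.
        exact: neq_mem r2R cR.
      have n2 : r2' i \notin [:: a; b; c].
        apply: notin3; last exact: neq_mem r2R' cR'.
          by rewrite eq_sym (neq_mem aR) //; have /and4P[] := ohR' OH r2R'.
        by rewrite (inj_eq ir') eq_sym neq_lift.
      by have [-> ->] := Hn _ n1; have [-> ->] := Hn _ n2.
    + have /and4P[iR iR' iT iU] := ohS OH hi.
      have n1 : i \notin [:: a; b; c].
        apply: notin3; [by rewrite eq_sym (neq_mem aR) | by rewrite eq_sym (neq_mem bR'0) |
          by rewrite eq_sym (neq_mem cU)].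
      by have [-> ->] := Hn _ n1.
    + have /and4P[iR iR' iS iU] := ohT OH hi.
      have n1 : i \notin [:: a; b; c].
        apply: notin3; [by rewrite eq_sym (neq_mem aR) | by rewrite eq_sym (neq_mem bR'0) |
          by rewrite eq_sym (neq_mem cU)].
      by have [-> ->] := Hn _ n1.
  - move=> xs ys h1 h2; exact: idA.
exists g; split => //; rewrite Hgf.
apply: (of_class_intro (U := U2)) => //.
- by move=> i j /ir /lift_inj.
- by move=> i j /ir' /lift_inj.
- by rewrite /T2 cardsU1 cardsU1 !inE (negbTE ac) (negbTE aT) cT' cT.
- by rewrite /U2 cardsU1 !inE (negbTE bU) andbF -cU' (cardsD1 c U) cU.
- move=> x; rewrite (memR2 ir x) (memR2 ir' x) /T2 /U2 !inE -/R -/R' -/a -/b.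
  have ha : (x == a) ==> (x \in R) by apply/implyP => /eqP ->.
  have hb : (x == b) ==> (x \in R') by apply/implyP => /eqP ->.
  have hc : (x == c) ==> (x \in U) by apply/implyP => /eqP ->.
  move: (OH x) ha hb hc.
  by case: (x \in R); case: (x \in R'); case: (x \in S); case: (x \in T); case: (x \in U);
     case: (x == a); case: (x == b); case: (x == c).
Qed.

Lemma caseB m p (r r' : 'I_p.+1 -> 'I_m) (S T U : {set 'I_m}) z c sigma tau upsilon :
  injective r -> injective r' ->
  oh [set r i | i in 'I_p.+1] [set r' i | i in 'I_p.+1] S T U ->
  c \in S -> #|S| = sigma -> #|T| = tau -> #|U| = upsilon ->
  exists g, in_group_ring g /\
    of_class p sigma tau.+2 upsilon (gr_act g (class_fun r r' S T z)).
Proof.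
move=> ir ir' OH cS cS' cT cU'.
set R := [set r i | i in 'I_p.+1] in OH *; set R' := [set r' i | i in 'I_p.+1] in OH *.
set a := r ord0; set b := r' ord0.
have aR : a \in R by apply: imset_f.
have bR'0 : b \in R' by apply: imset_f.
have /and4P[aR' aS aT aU] := ohR OH aR.
have /and4P[bR bS bT bU] := ohR' OH bR'0.
have /and4P[cR cR' cT' cU] := ohS OH cS.
have ab : a != b := neq_mem aR bR.
have ac : a != c by rewrite eq_sym (neq_mem cS aS).
have bc : b != c by rewrite eq_sym (neq_mem cS bS).
set r2 := fun i : 'I_p => r (lift ord0 i).
set r2' := fun i : 'I_p => r' (lift ord0 i).
set S2 := a |: (S :\ c).
set T2 := b |: (c |: T).
set z2 := fun i => if i \in T then z i else false.
set rest := fun v : Vsp m =>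
  (\prod_(i < p) (xco (r2 i) v * yco (r2 i) v + xco (r2' i) v * yco (r2' i) v))
  * (\prod_(i in S :\ c) (xco i v * yco i v))
  * (\prod_(i in T) (if z i then yco i v else xco i v)).
have [g [Hg Hgf]] : exists g, in_group_ring g /\
    gr_act g (class_fun r r' S T z) = class_fun r2 r2' S2 T2 z2.
  apply: (@reduce m [:: a; b; c] a _ wsB _ _ LB LB' rest).
  - by rewrite /= !inE negb_or ab ac bc.
  - by [].
  - move=> v; rewrite /class_fun ffunE big_ord_recl (big_setD1 c cS) /rest /LB /loc /=.
    exact: acB1.
  - move=> v; rewrite /class_fun ffunE /rest /LB' /loc /= /T2 /S2.
    rewrite big_setU1 /=; last by rewrite !inE (negbTE aS) andbF.
    rewrite big_setU1 /=; last by rewrite !inE negb_or bc bT.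
    rewrite big_setU1 //= /z2 (negbTE bT) (negbTE cT').
    under [X in xco c v * X]eq_bigr => i hi do rewrite hi.
    exact: acB2.
  - move=> v w Hag; rewrite /rest.
    have Hn : forall i, i \notin [:: a; b; c] ->
        xco i w = xco i v /\ yco i w = yco i v by move=> i hi; exact: Hag.
    congr (_ * _ * _); apply: eq_bigr => i hi.
    + have r2R : r2 i \in R by apply: imset_f.
      have r2R' : r2' i \in R' by apply: imset_f.
      have n1 : r2 i \notin [:: a; b; c].
        apply: notin3; first by rewrite (inj_eq ir) eq_sym neq_lift.
          exact: neq_mem r2R bR.
        exact: neq_mem r2R cR.
      have n2 : r2' i \notin [:: a; b; c].
        apply: notin3; last exact: neq_mem r2R' cR'.
          by rewrite eq_sym (neq_mem aR) //; have /and4P[] := ohR' OH r2R'.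
        by rewrite (inj_eq ir') eq_sym neq_lift.
      by have [-> ->] := Hn _ n1; have [-> ->] := Hn _ n2.
    + move: hi; rewrite !inE => /andP[ic hi].
      have /and4P[iR iR' iT iU] := ohS OH hi.
      have n1 : i \notin [:: a; b; c].
        by apply: notin3 => //; [rewrite eq_sym (neq_mem aR) | rewrite eq_sym (neq_mem bR'0)].
      by have [-> ->] := Hn _ n1.
    + have /and4P[iR iR' iS iU] := ohT OH hi.
      have n1 : i \notin [:: a; b; c].
        apply: notin3; [by rewrite eq_sym (neq_mem aR) | by rewrite eq_sym (neq_mem bR'0) |
          by rewrite eq_sym (neq_mem cS)].
      by have [-> ->] := Hn _ n1.
  - move=> xs ys h1 h2; exact: idB.
exists g; split => //; rewrite Hgf.
apply: (of_class_intro (U := U)) => //.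
- by move=> i j /ir /lift_inj.
- by move=> i j /ir' /lift_inj.
- by rewrite /S2 cardsU1 !inE (negbTE aS) andbF -cS' (cardsD1 c S) cS.
- by rewrite /T2 cardsU1 cardsU1 !inE (negbTE bc) (negbTE bT) cT' cT.
- move=> x; rewrite (memR2 ir x) (memR2 ir' x) /S2 /T2 !inE -/R -/R' -/a -/b.
  have ha : (x == a) ==> (x \in R) by apply/implyP => /eqP ->.
  have hb : (x == b) ==> (x \in R') by apply/implyP => /eqP ->.
  have hc : (x == c) ==> (x \in S) by apply/implyP => /eqP ->.
  move: (OH x) ha hb hc.
  by case: (x \in R); case: (x \in R'); case: (x \in S); case: (x \in T); case: (x \in U);
     case: (x == a); case: (x == b); case: (x == c).
Qed.

Lemma caseC m p (r r' : 'I_p.+2 -> 'I_m) (S T U : {set 'I_m}) z sigma tau upsilon :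
  injective r -> injective r' ->
  oh [set r i | i in 'I_p.+2] [set r' i | i in 'I_p.+2] S T U ->
  #|S| = sigma -> #|T| = tau -> #|U| = upsilon ->
  exists g, in_group_ring g /\
    of_class p.+1 sigma tau.+2 upsilon (gr_act g (class_fun r r' S T z)).
Proof.
move=> ir ir' OH cS' cT cU'.
set R := [set r i | i in 'I_p.+2] in OH *; set R' := [set r' i | i in 'I_p.+2] in OH *.
set a := r ord0; set b := r' ord0.
set c := r (lift ord0 ord0); set d := r' (lift ord0 ord0).
have aR : a \in R by apply: imset_f.
have bR'0 : b \in R' by apply: imset_f.
have cR : c \in R by apply: imset_f.
have dR'0 : d \in R' by apply: imset_f.
have /and4P[aR' aS aT aU] := ohR OH aR.
have /and4P[bR bS bT bU] := ohR' OH bR'0.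
have /and4P[cR' cS cT' cU] := ohR OH cR.
have /and4P[dR dS dT dU] := ohR' OH dR'0.
have ab : a != b := neq_mem aR bR.
have ac : a != c by rewrite (inj_eq ir) neq_lift.
have ad : a != d := neq_mem aR dR.
have bc : b != c by rewrite eq_sym (neq_mem cR bR).
have bd : b != d by rewrite (inj_eq ir') neq_lift.
have cd : c != d := neq_mem cR dR.
set r2 := fun i : 'I_p.+1 => r (lift ord0 i).
set r2' := fun i : 'I_p.+1 => r' (lift ord0 i).
set T2 := a |: (b |: T).
set z2 := fun i => if i \in T then z i else false.
set rest := fun v : Vsp m =>
  (\prod_(i < p) (xco (r2 (lift ord0 i)) v * yco (r2 (lift ord0 i)) v
                  + xco (r2' (lift ord0 i)) v * yco (r2' (lift ord0 i)) v))
  * (\prod_(i in S) (xco i v * yco i v))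
  * (\prod_(i in T) (if z i then yco i v else xco i v)).
have [g [Hg Hgf]] : exists g, in_group_ring g /\
    gr_act g (class_fun r r' S T z) = class_fun r2 r2' S T2 z2.
  apply: (@reduce m [:: a; b; c; d] a _ wsC _ _ LC LC' rest).
  - by rewrite /= !inE !negb_or ab ac ad bc bd cd.
  - by [].
  - move=> v; rewrite /class_fun ffunE big_ord_recl big_ord_recl /rest /LC /loc /=.
    exact: acC1.
  - move=> v; rewrite /class_fun ffunE /rest /LC' /loc /= /T2.
    rewrite big_ord_recl.
    rewrite big_setU1 /=; last by rewrite !inE negb_or ab aT.
    rewrite big_setU1 //= /z2 (negbTE aT) (negbTE bT).
    under [X in xco b v * X]eq_bigr => i hi do rewrite hi.
    exact: acC2.
  - move=> v w Hag; rewrite /rest.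
    have Hn : forall i, i \notin [:: a; b; c; d] ->
        xco i w = xco i v /\ yco i w = yco i v by move=> i hi; exact: Hag.
    congr (_ * _ * _); apply: eq_bigr => i hi.
    + have r2R : r2 (lift ord0 i) \in R by apply: imset_f.
      have r2R' : r2' (lift ord0 i) \in R' by apply: imset_f.
      have n1 : r2 (lift ord0 i) \notin [:: a; b; c; d].
        apply: notin4.
        - by rewrite (inj_eq ir) eq_sym neq_lift.
        - exact: neq_mem r2R bR.
        - by rewrite (inj_eq ir) (inj_eq lift_inj) eq_sym neq_lift.
        - exact: neq_mem r2R dR.
      have n2 : r2' (lift ord0 i) \notin [:: a; b; c; d].
        have /and4P[h1 _ _ _] := ohR' OH r2R'.
        apply: notin4.
        - by rewrite eq_sym (neq_mem aR).
        - by rewrite (inj_eq ir') eq_sym neq_lift.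
        - by rewrite eq_sym (neq_mem cR).
        - by rewrite (inj_eq ir') (inj_eq lift_inj) eq_sym neq_lift.
      by have [-> ->] := Hn _ n1; have [-> ->] := Hn _ n2.
    + have /and4P[iR iR' iT iU] := ohS OH hi.
      have n1 : i \notin [:: a; b; c; d].
        by apply: notin4; rewrite eq_sym; [exact: neq_mem aR iR | exact: neq_mem bR'0 iR' | exact: neq_mem cR iR | exact: neq_mem dR'0 iR'].
      by have [-> ->] := Hn _ n1.
    + have /and4P[iR iR' iS iU] := ohT OH hi.
      have n1 : i \notin [:: a; b; c; d].
        by apply: notin4; rewrite eq_sym; [exact: neq_mem aR iR | exact: neq_mem bR'0 iR' | exact: neq_mem cR iR | exact: neq_mem dR'0 iR'].
      by have [-> ->] := Hn _ n1.
  - move=> xs ys h1 h2; exact: idC.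
exists g; split => //; rewrite Hgf.
apply: (of_class_intro (U := U)) => //.
- by move=> i j /ir /lift_inj.
- by move=> i j /ir' /lift_inj.
- by rewrite /T2 cardsU1 cardsU1 !inE (negbTE ab) (negbTE aT) bT cT.
- move=> x; rewrite (memR2 ir x) (memR2 ir' x) /T2 !inE -/R -/R' -/a -/b.
  have ha : (x == a) ==> (x \in R) by apply/implyP => /eqP ->.
  have hb : (x == b) ==> (x \in R') by apply/implyP => /eqP ->.
  move: (OH x) ha hb.
  by case: (x \in R); case: (x \in R'); case: (x \in S); case: (x \in T); case: (x \in U);
     case: (x == a); case: (x == b).
Qed.

Unset Implicit Arguments.
Local Close Scope ring_scope.

Theorem lemma6p3 (m : nat) (Bf : nat -> nat -> {set Fn m})
    (rho sigma tau upsilon : nat) (f : Fn m) :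
  valid_B Bf ->
  symp_basis_fun Bf f ->
  of_class rho sigma tau upsilon f ->
  ~ [/\ rho = 1%N, sigma = 0%N, tau = (m - 2)%N & upsilon = 0%N] ->
  (0 < rho)%N ->
  exists a : 'M['F_2]_(m + m) -> 'F_2,
    in_group_ring a /\ of_class rho.-1 sigma tau.+2 upsilon (gr_act a f).
Proof.
move=> _ _ /of_class_elim [r [r' [S [T [U [z [[ir ir' cS cT cU] [OH ->]]]]]]]] Hne Hrho.
case: rho r r' ir ir' OH Hne Hrho => // p r r' ir ir' OH Hne _.
case: (set_0Vmem U) => [U0 | [c hc]]; last exact: caseA ir ir' OH hc cS cT cU.
case: (set_0Vmem S) => [S0 | [c hc]]; last exact: caseB ir ir' OH hc cS cT cU.
case: p r r' ir ir' OH Hne => [|p] r r' ir ir' OH Hne; last exact: caseC ir ir' OH cS cT cU.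
exfalso; apply: Hne; split => //.
- by rewrite -cS S0 cards0.
- have := oh_card OH; rewrite !card_imset // card_ord S0 U0 cards0 cT => <-.
  by rewrite !addn0 add1n addSn subSS subSS subn0.
- by rewrite -cU U0 cards0.
Qed.
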